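(* Let $K=\bigoplus_{p,q\ge0}K^{pq}$ be a double complex of Abelian topological groups with continuous differentials $d':K^{pq}\to K^{p+1,q}$, $d'':K^{pq}\to K^{p,q+1}$ satisfying $(d'+d'')^2=0$. Suppose that $d'':K^{pq}\to Z^{p,q+1}_{II}(K)$ is open for all $p,q\ge0$. Then the zero homomorphism $0^\bullet\to K^\bullet/K_I^\bullet$, and hence the inclusion $K_I^\bullet\to K^\bullet$, are quasi-open. In particular $H^n(K_I^\bullet)\to H^n(K^\bullet)$ is open for $n\ge0$.
   Context: $K^\bullet$ is the total complex: $K^n=\bigoplus_{p+q=n}K^{pq}$ (product topology; $K^n=0$ for $n<0$) with differential $d=d'+d''$. $Z^{pq}_{II}(K)=\ker(d''|K^{pq})$ with the subspace topology. $K_I$ is the subcomplex with $K_I^{pq}=0$ for $q>0$ and $K_I^{p0}=Z^{p0}_{II}(K)$, so $K_I^n=K_I^{n0}$ with differential $d'$. Cohomology groups carry the quotient topologies of cycles (subspace topology) by boundaries; $K^\bullet/K_I^\bullet$ has the quotient topology. For a homomorphism $\varphi:A^\bullet\to B^\bullet$ of complexes of Abelian topological groups, $\varphi$ is quasi-open if for every $n$ the map $\ker(d_A|A^n)\oplus B^{n-1}\to\ker(d_B|B^n)$, $(a,b)\mapsto\varphi a-d_Bb$, is open. *)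

(* Defs.v *)
From HB Require Import structures.
From mathcomp Require Import all_boot all_order all_algebra.
From mathcomp Require Import all_classical all_reals all_analysis.
Set Implicit Arguments. Unset Strict Implicit. Unset Printing Implicit Defensive.
Import Order.TTheory GRing.Theory Num.Theory.
Local Open Scope classical_set_scope.
Local Open Scope ring_scope.

(** All graded objects (K, K_I, K/K_I, 0) are encoded inside the single
  bigraded group  BG := forall p q, K p q  (pointwise operations).
  A complex A of Abelian topological groups is encoded by, for each degree n,
  - a subgroup  cS A n  of BG (representatives of degree-n elements),
  - a subgroup  cN A n  of cS A n (what is quotiented out),
  - the family  copen A n  of open subsets of the topological group cS A n,
  - a differential  cd A : BG -> BG.
  The degree-n group of A is  A^n = cS A n / cN A n  with the quotient
  topology; subsets of A^n are encoded by cN A n-saturated subsets of cS A n,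
  and such a set is open in A^n iff it is open in cS A n (quotient topology). *)

Section DoubleComplex.
Variable K : nat -> nat -> topologicalZmodType.
Variable d' : forall p q, {additive K p q -> K p.+1 q}.
Variable d'' : forall p q, {additive K p q -> K p q.+1}.

Definition BG := forall p q, K p q.
Definition bg0 : BG := fun p q => 0.
Definition bgadd (x y : BG) : BG := fun p q => x p q + y p q.
Definition bgopp (x : BG) : BG := fun p q => - x p q.
Definition bgsub (x y : BG) : BG := bgadd x (bgopp y).

Definition dh (x : BG) : BG := fun p =>
  match p as p0 return forall q, K p0 q with
  | 0 => fun q => 0
  | p'.+1 => fun q => d' p' q (x p' q)
  end.
Definition dv (x : BG) : BG := fun p q =>
  match q as q0 return K p q0 with
  | 0 => 0
  | q'.+1 => d'' p q' (x p q')
  end.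
Definition totd (x : BG) : BG := bgadd (dh x) (dv x).

Definition Tot (n : nat) : set BG :=
  [set x | forall p q, (p + q)%N <> n -> x p q = 0].

(** product topology on K^n *)
Definition Tot_open (n : nat) (U : set BG) : Prop :=
  U `<=` Tot n /\
  forall x, U x -> exists V : forall p q, set (K p q),
    (forall p q, (p + q)%N = n -> open (V p q) /\ V p q (x p q)) /\
    (forall y, Tot n y -> (forall p q, (p + q)%N = n -> V p q (y p q)) -> U y).

(** K_I^n = K_I^{n0} = Z_II^{n0}(K), placed in bidegree (n,0) *)
Definition KI (n : nat) : set BG :=
  [set x | (forall p q, (p, q) <> (n, 0%N) -> x p q = 0) /\ d'' n 0 (x n 0%N) = 0].

(** subspace topology of Z_II^{n0}(K) in K^{n0} *)
Definition KI_open (n : nat) (U : set BG) : Prop :=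
  exists O : set (K n 0%N), open O /\ U = [set x | KI n x /\ O (x n 0%N)].

Record cplx := Cplx {
  cS : nat -> set BG;
  cN : nat -> set BG;
  copen : nat -> set BG -> Prop;
  cd : BG -> BG }.

Definition cplxK : cplx := Cplx Tot (fun _ => [set bg0]) Tot_open totd.
Definition cplxKI : cplx := Cplx KI (fun _ => [set bg0]) KI_open totd.
Definition cplxKmodKI : cplx := Cplx Tot KI Tot_open totd.
Definition cplx0 : cplx :=
  Cplx (fun _ => [set bg0]) (fun _ => [set bg0]) (fun _ U => U `<=` [set bg0]) totd.

Definition saturated (N U : set BG) : Prop :=
  forall x m, U x -> N m -> U (bgadd x m).

Definition qopen (A : cplx) (n : nat) (U : set BG) : Prop :=
  U `<=` cS A n /\ saturated (cN A n) U /\ copen A n U.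

(** A^{n-1}, with A^{-1} = 0 *)
Definition Sprev (A : cplx) (n : nat) : set BG :=
  if n is n'.+1 then cS A n' else [set bg0].
Definition Nprev (A : cplx) (n : nat) : set BG :=
  if n is n'.+1 then cN A n' else [set bg0].
Definition qopen_prev (A : cplx) (n : nat) (U : set BG) : Prop :=
  if n is n'.+1 then qopen A n' U else U `<=` [set bg0].

Definition cyc (A : cplx) (n : nat) : set BG :=
  [set x | cS A n x /\ cN A n.+1 (cd A x)].
Definition cyc_open (A : cplx) (n : nat) (W : set BG) : Prop :=
  exists O, qopen A n O /\ W = O `&` cyc A n.

Definition bnd (A : cplx) (n : nat) : set BG :=
  if n is n'.+1 then
    [set bgadd (cd A b) m | b in cS A n' & m in cN A n]
  else cN A 0%N.

(** open subsets of H^n(A) = Z^n(A)/B^n(A) (quotient topology) *)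
Definition hom_open (A : cplx) (n : nat) (V : set BG) : Prop :=
  V `<=` cyc A n /\ saturated (bnd A n) V /\ cyc_open A n V.

(** H^n(phi) : H^n(A) -> H^n(B) is open (images of open sets, pulled back
    to Z^n(B), are open) *)
Definition hom_map_open (phi : BG -> BG) (A B : cplx) (n : nat) : Prop :=
  forall V, hom_open A n V ->
    cyc_open B n [set bgadd (phi x) b | x in V & b in bnd B n].

(** open subsets of Z^n(A) (+) B^{n-1} (product topology) *)
Definition src_open (A B : cplx) (n : nat) (W : set (BG * BG)) : Prop :=
  W `<=` cyc A n `*` Sprev B n /\
  (forall a b m m', W (a, b) -> cN A n m -> Nprev B n m' ->
      W (bgadd a m, bgadd b m')) /\
  (forall a b, W (a, b) -> exists U V,
      [/\ cyc_open A n U, U a, qopen_prev B n V, V b & U `*` V `<=` W]).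

(** phi : A -> B is quasi-open in degree n: the map
    Z^n(A) (+) B^{n-1} -> Z^n(B), (a,b) |-> phi a - d_B b, is open *)
Definition quasi_open_deg (phi : BG -> BG) (A B : cplx) (n : nat) : Prop :=
  forall W, src_open A B n W ->
    cyc_open B n [set bgadd (bgsub (phi w.1) (cd B w.2)) m
                 | w in W & m in cN B n].

Definition quasi_open (phi : BG -> BG) (A B : cplx) : Prop :=
  forall n, quasi_open_deg phi A B n.

End DoubleComplex.

(* Main.v *)
Require Import Defs.
From HB Require Import structures.
From mathcomp Require Import all_boot all_order all_algebra.
From mathcomp Require Import all_classical all_reals all_analysis.
From mathcomp Require Import zify.
Import Order.TTheory GRing.Theory Num.Theory.
Local Open Scope classical_set_scope.
Local Open Scope ring_scope.

Lemma cont_nbhs (T U : topologicalType) (f : T -> U) x y (V : set U) :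
  continuous f -> f x = y -> nbhs y V -> nbhs x (f @^-1` V).
Proof. by move=> cf <- nV; apply: cf. Qed.

Lemma sub_nbhs {M : topologicalZmodType} {O : set M} : nbhs 0 O ->
  exists A B, [/\ nbhs 0 A, nbhs 0 B & forall x y, A x -> B y -> O (x - y)].
Proof.
move=> nO.
have : nbhs ((0:M),(0:M)) ((fun x : M * M => x.1 - x.2) @^-1` O).
  by apply: (@cont_nbhs _ _ _ _ 0) => //; [exact: sub_continuous| rewrite /= subr0].
case=> -[A B] /= [nA nB] sub; exists A, B; split => // x y Ax By.
exact: (sub (x, y)).
Qed.

Lemma add_left_cont {M : topologicalZmodType} (b : M) : continuous (fun y => b + y).
Proof.
move=> x; apply: (@continuous_comp _ _ _ (fun y => (b, y)) (fun x : M * M => x.1 + x.2)).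
  by apply: cvg_pair; [exact: cvg_cst|exact: cvg_id].
exact: add_continuous.
Qed.

Lemma add_right_cont {M : topologicalZmodType} (b : M) : continuous (fun y => y + b).
Proof.
move=> x; apply: (@continuous_comp _ _ _ (fun y => (y, b)) (fun x : M * M => x.1 + x.2)).
  by apply: cvg_pair; [exact: cvg_id|exact: cvg_cst].
exact: add_continuous.
Qed.

Lemma open_sub_nbhs {T : topologicalType} {x : T} {A} : nbhs x A ->
  exists B, [/\ open B, B x & B `<=` A].
Proof. by rewrite nbhsE => -[B [oB Bx] BA]; exists B. Qed.

Lemma open_nbhs' {T : topologicalType} {x : T} {A} : open A -> A x -> nbhs x A.
Proof. by move=> oA Ax; rewrite nbhsE; exists A. Qed.

Lemma open_pre {T U : topologicalType} {f : T -> U} {A} : continuous f -> open A -> open (f @^-1` A).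
Proof. by move=> cf; apply: (continuousP f).1. Qed.

Lemma zmod_id1 (M : zmodType) (a b c : M) : - a + c + b = -(a + - b) + c.
Proof. by rewrite opprD opprK addrAC. Qed.

Lemma zid2 (M : zmodType) (y s0 tb tc m0 m1 : M) :
  y + - (s0 + - tb + m0) = - tc + m1 -> s0 + - (tb + tc) + (m0 + m1) = y.
Proof.
move=> H; have -> : y = - tc + m1 + (s0 + - tb + m0) by rewrite -H addrNK.
rewrite opprD addrA -[in LHS]addrA [in RHS]addrC -[in RHS]addrA.
rewrite [s0 + _]addrA -[in LHS]addrA; congr (_ + _); exact: addrCA.
Qed.
Lemma zid3 (M : zmodType) (y a tb tc m1 z0 : M) :
  y + - (a + - tb + z0) = - tc + m1 -> a + m1 + - (tb + tc) + z0 = y.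
Proof.
move=> H; have -> : y = - tc + m1 + (a + - tb + z0) by rewrite -H addrNK.
rewrite opprD [in RHS]addrC -!addrA; congr (_ + _).
rewrite addrCA; congr (_ + _).
by rewrite [- tc + z0]addrC addrCA [m1 + _]addrC.
Qed.

Section Alg.
Variable K : nat -> nat -> topologicalZmodType.
Variable d' : forall p q, {additive K p q -> K p.+1 q}.
Variable d'' : forall p q, {additive K p q -> K p q.+1}.
Local Notation BG := (BG K).
Local Notation bg0 := (bg0 K).
Local Notation bgadd := (@bgadd K).
Local Notation bgopp := (@bgopp K).
Local Notation dh := (@dh K d').
Local Notation dv := (@dv K d'').
Local Notation totd := (@totd K d' d'').
Local Notation Tot := (@Tot K).
Local Notation KI := (@KI K d'').

Lemma bgext (x y : BG) : (forall p q, x p q = y p q) -> x = y.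
Proof.
move=> H; apply: functional_extensionality_dep => p.
by apply: functional_extensionality_dep => q; exact: H.
Qed.

Lemma dh_add x y p q : dh (bgadd x y) p q = dh x p q + dh y p q.
Proof. by case: p => [|p] /=; [rewrite addr0|rewrite /Defs.bgadd raddfD]. Qed.
Lemma dv_add x y p q : dv (bgadd x y) p q = dv x p q + dv y p q.
Proof. by case: q => [|q] /=; [rewrite addr0|rewrite /Defs.bgadd raddfD]. Qed.
Lemma dh_opp x p q : dh (bgopp x) p q = - dh x p q.
Proof. by case: p => [|p] /=; [rewrite oppr0|rewrite /Defs.bgopp raddfN]. Qed.
Lemma dv_opp x p q : dv (bgopp x) p q = - dv x p q.
Proof. by case: q => [|q] /=; [rewrite oppr0|rewrite /Defs.bgopp raddfN]. Qed.

Lemma totd_add x y p q : totd (bgadd x y) p q = totd x p q + totd y p q.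
Proof. by rewrite /Defs.totd /Defs.bgadd dh_add dv_add addrACA. Qed.
Lemma totd_opp x p q : totd (bgopp x) p q = - totd x p q.
Proof. by rewrite /Defs.totd /Defs.bgadd dh_opp dv_opp opprD. Qed.

Lemma dh_supp x p q : (forall p', p = p'.+1 -> x p' q = 0) -> dh x p q = 0.
Proof. by case: p => [|p] //= H; rewrite H // raddf0. Qed.
Lemma dv_supp x p q : (forall q', q = q'.+1 -> x p q' = 0) -> dv x p q = 0.
Proof. by case: q => [|q] //= H; rewrite H // raddf0. Qed.

Lemma totd_supp x p q : (forall p', p = p'.+1 -> x p' q = 0) ->
  (forall q', q = q'.+1 -> x p q' = 0) -> totd x p q = 0.
Proof. by move=> H1 H2; rewrite /Defs.totd /Defs.bgadd dh_supp // dv_supp // addr0. Qed.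

Lemma totd0 p q : totd bg0 p q = 0.
Proof. by apply: totd_supp. Qed.

Lemma Tot_totd n c : (forall p q, (p + q).+1 <> n -> c p q = 0) -> Tot n (totd c).
Proof.
move=> Hc p q Hpq; apply: totd_supp => [p' Ep|q' Eq]; apply: Hc.
  by move: Hpq; rewrite Ep addSn.
by move: Hpq; rewrite Eq addnS.
Qed.

Lemma Tot_add n x y : Tot n x -> Tot n y -> Tot n (bgadd x y).
Proof. by move=> Hx Hy p q H; rewrite /Defs.bgadd Hx // Hy // addr0. Qed.
Lemma Tot_opp n x : Tot n x -> Tot n (bgopp x).
Proof. by move=> Hx p q H; rewrite /Defs.bgopp Hx // oppr0. Qed.
Lemma Tot0 n : Tot n bg0.
Proof. by []. Qed.

Lemma KI_Tot n m : KI n m -> Tot n m.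
Proof. by move=> [H _] p q Hpq; apply: H => -[E1 E2]; apply: Hpq; rewrite E1 E2 addn0. Qed.
Lemma KI_add n x y : KI n x -> KI n y -> KI n (bgadd x y).
Proof.
move=> [Hx1 Hx2] [Hy1 Hy2]; split => [p q H|]; rewrite /Defs.bgadd.
  by rewrite Hx1 // Hy1 // addr0.
by rewrite raddfD Hx2 Hy2 addr0.
Qed.
Lemma KI_opp n x : KI n x -> KI n (bgopp x).
Proof.
move=> [Hx1 Hx2]; split => [p q H|]; rewrite /Defs.bgopp.
  by rewrite Hx1 // oppr0.
by rewrite raddfN Hx2 oppr0.
Qed.
Lemma KI0 n : KI n bg0.
Proof. by split => //; rewrite /Defs.bg0 raddf0. Qed.


Variable cont_d' : forall p q, continuous (d' p q).
Variable cont_d'' : forall p q, continuous (d'' p q).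
Variable dd0 : forall x : BG, totd (totd x) = bg0.
Variable open_d'' : forall p q (U : set (K p q)), open U ->
      exists O : set (K p q.+1),
        open O /\ d'' p q @` U = O `&` [set z | d'' p q.+1 z = 0].

Lemma ddz x p q : totd (totd x) p q = 0.
Proof. by rewrite dd0. Qed.

Lemma KI_totd_off n m : KI n m -> forall p q, (p, q) <> (n.+1, 0%N) -> totd m p q = 0.
Proof.
move=> [H1 H2] p q Hpq; rewrite /Defs.totd /Defs.bgadd dh_supp ?add0r.
  case: q Hpq => [|q] Hpq //=.
  have [[Ep Eq]|Hne] := pselect ((p, q) = (n, 0%N)).
    by subst p q; rewrite H2.
  by rewrite H1 // raddf0.
by move=> p' Ep; apply: H1 => -[E1 E2]; apply: Hpq; rewrite Ep E1 E2.
Qed.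

Lemma KI_totd n m : KI n m -> KI n.+1 (totd m).
Proof.
move=> Hm; split; first exact: KI_totd_off.
have := f_equal (fun x => x n.+1 1%N) (dd0 m).
rewrite {1}/Defs.totd /Defs.bgadd /= (@KI_totd_off _ _ Hm) //.
by rewrite raddf0 add0r.
Qed.

Lemma bgaddE x y p q : bgadd x y p q = x p q + y p q. Proof. by []. Qed.
Lemma bgoppE x p q : bgopp x p q = - x p q. Proof. by []. Qed.

Lemma core n j : (j <= n)%N -> forall (Nc Nm : forall p q, set (K p q)),
 (forall p q, nbhs 0 (Nc p q)) -> (forall p q, nbhs 0 (Nm p q)) ->
 exists O : forall p q, set (K p q), (forall p q, nbhs 0 (O p q)) /\
 forall z, Tot n z -> (forall p q, (p < n - j)%N -> z p q = 0) ->
   (forall p q, (p, q) <> (n.+1, 0%N) -> totd z p q = 0) -> (forall p q, O p q (z p q)) ->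
   exists c m, [/\ (forall p q, ((p + q).+1 <> n)%N -> c p q = 0),
     (forall p q, (p < n - j)%N -> c p q = 0),
     (forall p q, Nc p q (c p q)), KI n m /\ Nm n 0%N (m n 0%N) &
     z = bgadd (bgopp (totd c)) m].
Proof.
elim: j => [|j IH] Hj Nc Nm HNc HNm.
  exists Nm; split => // z Tz Hs Hc HO.
  exists bg0, z; split => //.
  - by move=> p q; exact: (nbhs_singleton (HNc p q)).
  - split; last exact: HO.
    split.
      move=> p q Hpq; case: (ltnP p n) => Hp; first by apply: Hs; rewrite subn0.
      apply: Tz => E; apply: Hpq.
      have -> : q = 0%N by lia.
      by have -> : p = n by lia.
    have H1 : (n, 1%N) <> (n.+1, 0%N) by case.
    have := Hc _ _ H1.
    rewrite /Defs.totd bgaddE dh_supp ?add0r //.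
    by move=> p' Ep; apply: Hs; rewrite subn0 Ep.
  - by apply: bgext => p q; rewrite bgaddE bgoppE totd0 oppr0 add0r.
have [Op [HOp P']] := IH (ltnW Hj) Nc Nm HNc HNm.
have AB : forall p q, {AB : set (K p q) * set (K p q) | [/\ nbhs 0 AB.1, nbhs 0 AB.2 &
    forall x y, AB.1 x -> AB.2 y -> Op p q (x - y)]}.
  move=> p q; apply: cid; have [A [B [hA hB hAB]]] := sub_nbhs (HOp p q).
  by exists (A, B).
pose A p q := (sval (AB p q)).1.
pose B p q := (sval (AB p q)).2.
have hA : forall p q, nbhs 0 (A p q) by move=> p q; case: (svalP (AB p q)).
have hAB : forall p q x y, A p q x -> B p q y -> Op p q (x - y).
  by move=> p q; case: (svalP (AB p q)).
pose U p q := [set y : K p q | Nc p q (- y) /\ B p.+1 q (d' p q y)].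
have hU : forall p q, nbhs 0 (U p q).
  move=> p q; apply: filterI.
    apply: (@cont_nbhs _ _ (fun y => - y) 0 0 (Nc p q)) => //.
      exact: opp_continuous.
      by rewrite oppr0.
    exact: HNc.
  apply: (@cont_nbhs _ _ (d' p q) 0 0 (B p.+1 q)) => //; last by case: (svalP (AB p.+1 q)).
    exact: cont_d'.
  by rewrite raddf0.
have Uo' : forall p q, {V : set (K p q) | [/\ open V, V 0 & V `<=` U p q]}.
  by move=> p q; apply: cid; exact: open_sub_nbhs (hU p q).
pose Uo p q := sval (Uo' p q).
have O2' : forall p q, {O : set (K p q.+1) | open O /\
    d'' p q @` Uo p q = O `&` [set z | d'' p q.+1 z = 0]}.
  by move=> p q; apply: cid; apply: open_d''; case: (svalP (Uo' p q)).
pose O2 p q := sval (O2' p q).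
pose Osh p q : set (K p q) := match q as q0 return set (K p q0) with
  | 0%N => setT | q'.+1 => O2 p q' end.
exists (fun p q => Op p q `&` A p q `&` Osh p q); split.
  move=> p q; apply: filterI; first exact: filterI.
  case: q => [|q] /=; first exact: filterT.
  apply: open_nbhs'; first by case: (svalP (O2' p q)).
  have : (d'' p q @` Uo p q) 0.
    by exists 0; [case: (svalP (Uo' p q))|rewrite raddf0].
  by rewrite (proj2 (svalP (O2' p q))) => -[].
move=> z Tz Hs Hc HO.
set p0 := (n - j.+1)%N in Hs *.
have Hp0 : (p0 + j.+1 = n)%N by rewrite /p0 subnK.
have Hnj : (n - j = p0.+1)%N by rewrite /p0; lia.
clearbody p0.
have E' : forall p q, {y : K p q | O2 p q (z p q.+1) /\ d'' p q.+1 (z p q.+1) = 0 ->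
    Uo p q y /\ d'' p q y = z p q.+1}.
  move=> p q; apply: cid.
  have [H|H] := pselect (O2 p q (z p q.+1) /\ d'' p q.+1 (z p q.+1) = 0).
    have : (d'' p q @` Uo p q) (z p q.+1) by rewrite (proj2 (svalP (O2' p q))).
    by case=> y Uy Ey; exists y.
  by exists 0.
pose E p q := sval (E' p q).
pose e : BG := fun p q => if ((p == p0) && (q == j))%N then E p q else 0.
have e_off : forall p q, (p, q) <> (p0, j) -> e p q = 0.
  move=> p q H; rewrite /e; case: ifP => // /andP [/eqP Ep /eqP Eq].
  by case: H; rewrite Ep Eq.
have e_on : e p0 j = E p0 j by rewrite /e !eqxx.
have z_top : d'' p0 j.+1 (z p0 j.+1) = 0.
  have H1 : (p0, j.+2) <> (n.+1, 0%N) by case.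
  have := Hc _ _ H1.
  rewrite /Defs.totd bgaddE dh_supp ?add0r //.
  by move=> p' Ep; apply: Hs; rewrite Ep.
have Ez : Uo p0 j (E p0 j) /\ d'' p0 j (E p0 j) = z p0 j.+1.
  apply: (svalP (E' p0 j)); split => //.
  by case: (HO p0 j.+1).
have EU : U p0 j (E p0 j).
  by case: (svalP (Uo' p0 j)) => _ _; apply; exact: Ez.1.
pose z' := bgadd z (bgopp (totd e)).
have Tz' : Tot n z'.
  apply: Tot_add => //; apply: Tot_opp; apply: Tot_totd => p q Hpq.
  by apply: e_off => -[E1 E2]; apply: Hpq; rewrite E1 E2 -Hp0 addnS.
have te_off : forall p q, (p, q) <> (p0.+1, j) -> (p, q) <> (p0, j.+1) -> totd e p q = 0.
  move=> p q H1 H2; apply: totd_supp => [p' Ep|q' Eq]; apply: e_off => -[E1 E2].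
    by apply: H1; rewrite Ep E1 E2.
  by apply: H2; rewrite Eq E1 E2.
have Hs' : forall p q, (p < n - j)%N -> z' p q = 0.
  rewrite Hnj => p q; rewrite ltnS leq_eqVlt => /orP [/eqP Ep| Hp].
    subst p.
    case: (eqVneq q j.+1) => [->|/eqP Hq].
      rewrite /z' bgaddE bgoppE /Defs.totd bgaddE dh_supp ?add0r /=.
        by rewrite e_on Ez.2 subrr.
      by move=> p' Ep; apply: e_off => -[E1 _]; lia.
    by apply: Tz' => Eq; apply: Hq; lia.
  rewrite /z' bgaddE bgoppE Hs // te_off ?oppr0 ?addr0 // => -[E1 _]; lia.
have Hc' : forall p q, (p, q) <> (n.+1, 0%N) -> totd z' p q = 0.
  by move=> p q H; rewrite totd_add totd_opp ddz oppr0 addr0; exact: Hc.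
have HOp' : forall p q, Op p q (z' p q).
  move=> p q.
  have [[E1 E2]|H1] := pselect ((p, q) = (p0.+1, j)).
    subst p q; rewrite /z' bgaddE bgoppE /Defs.totd bgaddE /= e_on.
    rewrite (@dv_supp e p0.+1 j); last by move=> q' _; apply: e_off => -[E1 _]; lia.
    rewrite addr0; apply: hAB; first by case: (HO p0.+1 j) => -[].
    exact: EU.2.
  have [[E1 E2]|H2] := pselect ((p, q) = (p0, j.+1)).
    subst p q; rewrite Hs'; first exact: (nbhs_singleton (HOp _ _)).
    by rewrite Hnj.
  rewrite /z' bgaddE bgoppE te_off // oppr0 addr0.
  by case: (HO p q) => -[].
have [c' [m [Hc1 Hc2 Hc3 [Hm Hm2] Hz']]] := P' z' Tz' Hs' Hc' HOp'.
rewrite Hnj in Hc2.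
exists (bgadd c' (bgopp e)), m; split => //.
- move=> p q H; rewrite bgaddE bgoppE Hc1 // e_off ?oppr0 ?addr0 //.
  by move=> -[E1 E2]; apply: H; rewrite E1 E2 -Hp0 addnS.
- move=> p q H; rewrite bgaddE bgoppE Hc2 ?e_off ?oppr0 ?addr0 //; last by lia.
  by move=> -[E1 _]; lia.
- move=> p q; have [[E1 E2]|H] := pselect ((p, q) = (p0, j)).
    subst p q; rewrite bgaddE bgoppE Hc2 // e_on add0r; exact: EU.1.
  by rewrite bgaddE bgoppE e_off // oppr0 addr0.
- apply: bgext => p q; have := f_equal (fun x => x p q) Hz'.
  rewrite /= /z' !bgaddE !bgoppE totd_add totd_opp => H.
  by rewrite -zmod_id1 -H subrK.
Qed.

Lemma totd_addE x y : totd (bgadd x y) = bgadd (totd x) (totd y).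
Proof. by apply: bgext => p q; rewrite totd_add. Qed.
Lemma totd_oppE x : totd (bgopp x) = bgopp (totd x).
Proof. by apply: bgext => p q; rewrite totd_opp. Qed.

Lemma totd_cancel a b m : totd (bgadd (bgsub a (totd b)) m) = bgadd (totd a) (totd m).
Proof.
apply: bgext => p q; rewrite /Defs.bgsub !totd_add totd_opp ddz.
by rewrite oppr0 addr0.
Qed.

Lemma loc_glob n (N C S : set BG) :
  N `<=` Tot n -> (forall a b, N a -> N b -> N (bgadd a (bgopp b))) -> N bg0 ->
  (forall x m, N m -> C x -> C (bgadd x m)) ->
  (forall x m, N m -> S (bgadd x m) -> S x) ->
  S `<=` C -> S `<=` Tot n ->
  (forall s, S s -> exists Vx : forall p q, set (K p q),
     [/\ (forall p q, open (Vx p q)), (forall p q, Vx p q (s p q)) &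
     forall y, Tot n y -> (forall p q, (p + q)%N = n -> Vx p q (y p q)) -> C y -> S y]) ->
  exists O, [/\ O `<=` Tot n, saturated N O, Tot_open n O & S = O `&` C].
Proof.
move=> NT Nsub N0 CN SN SC ST loc.
pose O := [set x | Tot n x /\ exists m, N m /\ exists Vx : forall p q, set (K p q),
   [/\ (forall p q, open (Vx p q)), (forall p q, Vx p q (x p q + m p q)) &
   forall y, Tot n y -> (forall p q, (p + q)%N = n -> Vx p q (y p q)) -> C y -> S y]].
have OT : O `<=` Tot n by move=> x [].
exists O; split => //.
- move=> x m0 [Tx [m [Nm [Vx [oV xV HV]]]]] Nm0.
  split; first exact: Tot_add Tx (NT _ Nm0).
  exists (bgadd m (bgopp m0)); split; first exact: Nsub.
  exists Vx; split => // p q; rewrite !bgaddE bgoppE.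
  by rewrite addrACA subrr addr0; exact: xV.
- split => // x [Tx [m [Nm [Vx [oV xV HV]]]]].
  exists (fun p q => [set y | Vx p q (y + m p q)]); split.
    move=> p q _; split; last exact: xV.
    by have := open_pre (add_right_cont (m p q)) (oV p q).
  move=> y Ty Hy; split => //; exists m; split => //; exists Vx; split => // p q.
  have [E|E] := eqVneq (p + q)%N n; first exact: Hy.
  have H : (p + q)%N <> n by apply/eqP.
  by have := xV p q; rewrite Ty // Tx.
- apply/seteqP; split.
    move=> s Ss; split; last exact: SC.
    split; first exact: ST.
    exists bg0; split => //.
    have [Vx [oV sV HV]] := loc s Ss.
    by exists Vx; split => // p q; rewrite /Defs.bg0 addr0.
  move=> x [[Tx [m [Nm [Vx [oV xV HV]]]]] Cx].
  apply: (SN x m Nm); apply: HV.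
  + exact: Tot_add Tx (NT m Nm).
  + by move=> p q _; exact: xV.
  + exact: CN.
Qed.

Definition prev_hyp n (V : set BG) : Prop :=
  if n is n'.+1 then Tot_open n' V else V `<=` [set bg0].

Lemma prev_nbhs n (V : set BG) b : prev_hyp n V -> V b ->
  exists Nc : forall p q, set (K p q), (forall p q, nbhs 0 (Nc p q)) /\
  forall c, (forall p q, ((p + q).+1 <> n)%N -> c p q = 0) ->
    (forall p q, Nc p q (c p q)) -> V (bgadd b c).
Proof.
rewrite /prev_hyp; case: n => [|n'] /= HV Vb.
  exists (fun p q => setT); split => [p q|c Hc _]; first exact: filterT.
  have -> : bgadd b c = b by apply: bgext => p q; rewrite bgaddE Hc // addr0.
  done.
case: HV => [VT HV]; have [V' [HV1 HV2]] := HV b Vb.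
exists (fun p q => if (p + q == n')%N then [set y | V' p q (b p q + y)] else setT).
split.
  move=> p q; case: eqP => [E|_]; last exact: filterT.
  have [oV Vb'] := HV1 p q E.
  apply: (@cont_nbhs _ _ (fun y => b p q + y) 0 (b p q)) => //.
  - exact: add_left_cont.
  - by rewrite addr0.
  - exact: open_nbhs'.
move=> c Hc HN; apply: HV2.
  apply: Tot_add; first exact: VT.
  by move=> p q H; apply: Hc => -[].
by move=> p q E; have := HN p q; rewrite E eqxx.
Qed.

Lemma prev_supp n (b : BG) : (if n is n'.+1 then Tot n' else [set bg0]) b ->
  forall p q, ((p + q).+1 <> n)%N -> b p q = 0.
Proof. by case: n => [|n'] /= Hb p q H; [rewrite Hb | apply: Hb => E; apply: H; rewrite E]. Qed.


Arguments Tot_add {n x y}. Arguments Tot_opp {n x}. Arguments KI_Tot {n m}.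
Arguments KI_add {n x y}. Arguments KI_opp {n x}. Arguments KI_totd {n m}.
Arguments prev_supp {n b}. Arguments prev_nbhs {n V b}. Arguments Tot_totd {n c}.

Lemma totd0E : totd bg0 = bg0.
Proof. by apply: bgext => p q; rewrite totd0. Qed.

Lemma part1 n W : src_open (cplx0 d' d'') (cplxKmodKI d' d'') n W ->
  cyc_open (cplxKmodKI d' d'') n
    [set bgadd (bgsub bg0 (totd w.2)) m | w in W & m in KI n].
Proof.
move=> [Wsub [_ Wloc]].
pose S := [set bgadd (bgsub bg0 (totd w.2)) m | w in W & m in KI n].
pose C := cyc (cplxKmodKI d' d'') n.
have SC : S `<=` C.
  move=> _ [[a b] /= Wab [m0 Hm0 <-]].
  have [_ Hb] := Wsub _ Wab.
  have Hb' := @prev_supp n b Hb.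
  split.
    rewrite /Defs.bgsub; apply: Tot_add; last exact: KI_Tot.
    by apply: Tot_add => //; apply: Tot_opp; exact: Tot_totd.
  rewrite /= totd_cancel totd0E; apply: KI_add; first exact: KI0.
  exact: KI_totd.
have ST : S `<=` Tot n by move=> s /SC [].
have [Ob [OT Osat Oo SE]] : exists O, [/\ O `<=` Tot n, saturated (KI n) O,
    Tot_open n O & S = O `&` C].
  apply: loc_glob => //.
  - by move=> x Hx; exact: (KI_Tot Hx).
  - by move=> a b Ha Hb; apply: KI_add => //; exact: KI_opp.
  - exact: KI0.
  - move=> x m Hm [Tx Cx]; split; first exact: Tot_add Tx (KI_Tot Hm).
    by rewrite /= totd_addE; apply: KI_add => //; exact: KI_totd.
  - move=> x m Hm [w Ww [m' Hm' E]]; exists w => //.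
    exists (bgadd m' (bgopp m)); first by apply: KI_add => //; exact: KI_opp.
    apply: bgext => p q; have := f_equal (fun f => f p q) E.
    rewrite !bgaddE bgoppE => H.
    by rewrite addrA H addrK.
  move=> _ [[a b] /= Wab [m0 Hm0 <-]].
  have [U [V [Ucyc Ua qV Vb UVW]]] := Wloc a b Wab.
  have HV' : prev_hyp n V.
    by move: qV; rewrite /prev_hyp; case: (n) => [|n'] /=; [by [] | case=> _ []].
  have [Nc [HNc HcV]] := @prev_nbhs n V b HV' Vb.
  have [Q0 [HQ0 P0]] := core n n (leqnn n) Nc (fun p q => setT) HNc (fun p q => filterT).
  have Oo' : forall p q, {B : set (K p q) | [/\ open B, B 0 & B `<=` Q0 p q]}.
    by move=> p q; apply: cid; exact: open_sub_nbhs (HQ0 p q).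
  have Sin : S (bgadd (bgsub bg0 (totd b)) m0) by exists (a, b) => //; exists m0.
  set s := bgadd (bgsub bg0 (totd b)) m0 in Sin *.
  have Cs := SC _ Sin.
  exists (fun p q => [set y | sval (Oo' p q) (y - s p q)]); split.
  - move=> p q; have [oB _ _] := svalP (Oo' p q).
    by have := open_pre (add_right_cont (- s p q)) oB.
  - by move=> p q /=; rewrite subrr; case: (svalP (Oo' p q)).
  move=> y Ty Hy Cy.
  pose z := bgadd y (bgopp s).
  have [c [m1 [Hc1 _ Hc3 [Hm1 _] Hz]]] : exists c m, [/\ (forall p q, ((p + q).+1 <> n)%N -> c p q = 0),
     (forall p q, (p < n - n)%N -> c p q = 0),
     (forall p q, Nc p q (c p q)), KI n m /\ (fun p q => setT) n 0%N (m n 0%N) &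
     z = bgadd (bgopp (totd c)) m].
    apply: P0.
    - exact: Tot_add Ty (Tot_opp (ST _ Sin)).
    - by move=> p q; rewrite subnn.
    - move=> p q H; rewrite totd_add totd_opp.
      have [_ [Hy1 _]] := Cy; have [_ [Hs1 _]] := Cs.
      by move: (Hy1 p q H) (Hs1 p q H) => /= -> ->; rewrite oppr0 addr0.
    - move=> p q; have [E|E] := eqVneq (p + q)%N n.
        by have [_ _] := svalP (Oo' p q); apply; exact: Hy.
      have E' : (p + q)%N <> n by apply/eqP.
      rewrite /z bgaddE bgoppE Ty // (ST _ Sin) // oppr0 addr0.
      exact: (nbhs_singleton (HQ0 p q)).
  exists (a, bgadd b c); first by apply: UVW; split => //; exact: HcV.
  exists (bgadd m0 m1); first exact: KI_add.
  apply: bgext => p q; have := f_equal (fun f => f p q) Hz.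
  rewrite /z /s /Defs.bgsub /= !bgaddE !bgoppE totd_add.
  exact: zid2.
exists Ob; split => //.
Qed.

Lemma part2 n W : src_open (cplxKI d' d'') (cplxK d' d'') n W ->
  cyc_open (cplxK d' d'') n
    [set bgadd (bgsub w.1 (totd w.2)) m | w in W & m in [set bg0]].
Proof.
move=> [Wsub [_ Wloc]].
pose S := [set bgadd (bgsub w.1 (totd w.2)) m | w in W & m in [set bg0]].
pose C := cyc (cplxK d' d'') n.
have bgadd0 : forall x, bgadd x bg0 = x by move=> x; apply: bgext => p q; rewrite bgaddE addr0.
have SC : S `<=` C.
  move=> _ [[a b] /= Wab [m0 Hm0 <-]].
  have [[KIa ta] Hb] := Wsub _ Wab.
  have Hb' := @prev_supp n b Hb.
  rewrite Hm0 bgadd0; split.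
    rewrite /Defs.bgsub; apply: Tot_add; first exact: KI_Tot.
    by apply: Tot_opp; exact: Tot_totd.
  rewrite /= -(bgadd0 (bgsub a (totd b))) totd_cancel.
  move: ta => /= ->; rewrite totd0E.
  by apply: bgext => p q; rewrite bgaddE addr0.
have ST : S `<=` Tot n by move=> s /SC [].
have [Ob [OT Osat Oo SE]] : exists O, [/\ O `<=` Tot n, saturated [set bg0] O,
    Tot_open n O & S = O `&` C].
  apply: loc_glob => //.
  - by move=> x ->.
  - move=> a b -> ->; apply: bgext => p q; rewrite bgaddE bgoppE.
    by rewrite /Defs.bg0 subrr.
  - by move=> x m ->; rewrite bgadd0.
  - by move=> x m ->; rewrite bgadd0.
  move=> _ [[a b] /= Wab [m0 Hm0 <-]].
  have [U [V [Ucyc Ua qV Vb UVW]]] := Wloc a b Wab.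
  have [OU [[OUsub [_ [Oa [oOa EOU]]]] EU]] := Ucyc.
  have [KIa ta] : cyc (cplxKI d' d'') n a by have := Ua; rewrite EU => -[].
  have Oaa : Oa (a n 0%N) by have := Ua; rewrite EU EOU => -[[]].
  have HV' : prev_hyp n V.
    by move: qV; rewrite /prev_hyp; case: (n) => [|n'] /=; [by [] | case=> _ []].
  have [Nc [HNc HcV]] := @prev_nbhs n V b HV' Vb.
  pose Nm := fun p q => [set v : K p q | forall x : BG, x p q = v ->
    (forall p' q', (p', q') <> (p, q) -> x p' q' = 0) -> Oa (a n 0%N + x n 0%N)].
  have HNm : forall p q, nbhs 0 (Nm p q).
    move=> p q; have [[E1 E2]|H] := pselect ((p, q) = (n, 0%N)).
      subst p q.
      apply: (@filterS _ _ _ [set v | Oa (a n 0%N + v)]).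
        by move=> v Hv x Ex _; rewrite Ex.
      apply: (@cont_nbhs _ _ (fun v => a n 0%N + v) 0 (a n 0%N)) => //.
      - exact: add_left_cont.
      - by rewrite addr0.
      - exact: open_nbhs'.
    apply: (@filterS _ _ _ setT); last exact: filterT.
    move=> v _ x Ex Hx; rewrite (Hx n 0%N) ?addr0 //.
    by move=> [E1 E2]; apply: H; rewrite E1 E2.
  have [Q0 [HQ0 P0]] := core n n (leqnn n) Nc Nm HNc HNm.
  have Oo' : forall p q, {B : set (K p q) | [/\ open B, B 0 & B `<=` Q0 p q]}.
    by move=> p q; apply: cid; exact: open_sub_nbhs (HQ0 p q).
  have Sin : S (bgadd (bgsub a (totd b)) m0) by exists (a, b) => //; exists m0.
  set s := bgadd (bgsub a (totd b)) m0 in Sin *.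
  have Cs := SC _ Sin.
  exists (fun p q => [set y | sval (Oo' p q) (y - s p q)]); split.
  - move=> p q; have [oB _ _] := svalP (Oo' p q).
    by have := open_pre (add_right_cont (- s p q)) oB.
  - by move=> p q /=; rewrite subrr; case: (svalP (Oo' p q)).
  move=> y Ty Hy Cy.
  pose z := bgadd y (bgopp s).
  have tz : forall p q, totd z p q = 0.
    move=> p q; rewrite totd_add totd_opp.
    have [_ ty] := Cy; have [_ ts] := Cs.
    by move: ty ts => /= -> ->; rewrite /Defs.bg0 oppr0 addr0.
  have [c [m1 [Hc1 _ Hc3 [Hm1 Hm2] Hz]]] : exists c m, [/\ (forall p q, ((p + q).+1 <> n)%N -> c p q = 0),
     (forall p q, (p < n - n)%N -> c p q = 0),
     (forall p q, Nc p q (c p q)), KI n m /\ Nm n 0%N (m n 0%N) &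
     z = bgadd (bgopp (totd c)) m].
    apply: P0.
    - exact: Tot_add Ty (Tot_opp (ST _ Sin)).
    - by move=> p q; rewrite subnn.
    - by move=> p q _; exact: tz.
    - move=> p q; have [E|E] := eqVneq (p + q)%N n.
        by have [_ _] := svalP (Oo' p q); apply; exact: Hy.
      have E' : (p + q)%N <> n by apply/eqP.
      rewrite /z bgaddE bgoppE Ty // (ST _ Sin) // oppr0 addr0.
      exact: (nbhs_singleton (HQ0 p q)).
  have Oam : Oa (a n 0%N + m1 n 0%N).
    by apply: Hm2 => //; case: Hm1.
  have tm1 : totd m1 = bg0.
    apply: bgext => p q; have := f_equal (fun f => totd f p q) Hz.
    by rewrite tz totd_add totd_opp ddz oppr0 add0r => <-.
  exists (bgadd a m1, bgadd b c).
    apply: UVW; split; last exact: HcV.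
    rewrite EU; split.
      by rewrite EOU; split => //; exact: KI_add.
    split; first exact: KI_add.
    by rewrite /= totd_addE tm1; move: ta => /= ->; rewrite bgadd0.
  exists bg0 => //.
  apply: bgext => p q; have := f_equal (fun f => f p q) Hz.
  rewrite /z /s Hm0 /Defs.bgsub /= !bgaddE !bgoppE !bgaddE !bgoppE totd_add.
  exact: zid3.
exists Ob; split => //.
Qed.

Lemma bnd_iff n b' : bnd (cplxK d' d'') n b' <-> exists2 b, Sprev (cplxK d' d'') n b & b' = totd b.
Proof.
have bgadd0 : forall x, bgadd x bg0 = x by move=> x; apply: bgext => p q; rewrite bgaddE addr0.
case: n => [|n'] /=; split.
- by move=> ->; exists bg0 => //; rewrite totd0E.
- by move=> [b -> ->]; rewrite totd0E.
- by move=> [b Tb [m -> <-]]; exists b => //; rewrite bgadd0.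
- by move=> [b Tb ->]; exists b => //; exists bg0 => //; rewrite bgadd0.
Qed.

Lemma Sprev_opp n b : Sprev (cplxK d' d'') n b -> Sprev (cplxK d' d'') n (bgopp b).
Proof.
case: n => [|n'] /=; last exact: Tot_opp.
by move=> ->; apply: bgext => p q; rewrite bgoppE /Defs.bg0 oppr0.
Qed.

Lemma part3 n : hom_map_open id (cplxKI d' d'') (cplxK d' d'') n.
Proof.
move=> V [Vsub [_ Vo]].
have bgadd0 : forall x, bgadd x bg0 = x by move=> x; apply: bgext => p q; rewrite bgaddE addr0.
have HW : src_open (cplxKI d' d'') (cplxK d' d'') n (V `*` Sprev (cplxK d' d'') n).
  split; [|split].
  - by move=> [a b] [Va Hb]; split => //; exact: Vsub.
  - move=> a b m m' [Va Hb] Hm Hm'.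
    have Hm'' : m' = bg0 by move: Hm'; case: (n).
    by move: Hm => /= ->; rewrite Hm'' !bgadd0.
  - move=> a b [Va Hb]; exists V, (Sprev (cplxK d' d'') n); split => //.
    case: (n) => [|n'] //=.
    split => //; split.
      by move=> x m Tx ->; rewrite bgadd0.
    split => // x Tx; exists (fun _ _ => setT); split => // p q _; split => //.
    exact: openT.
have H := part2 n _ HW.
suff -> : [set bgadd (id x) b | x in V & b in bnd (cplxK d' d'') n] =
  [set bgadd (bgsub w.1 (totd w.2)) m | w in V `*` Sprev (cplxK d' d'') n & m in [set bg0]]
  by [].
apply/seteqP; split.
  move=> _ [x Vx [b' /bnd_iff [b Sb ->] <-]].
  exists (x, bgopp b); first by split => //; exact: Sprev_opp.
  exists bg0 => //; apply: bgext => p q.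
  by rewrite /Defs.bgsub /= !bgaddE bgoppE totd_opp opprK /Defs.bg0 addr0.
move=> _ [[x b] [/= Vx Sb] [m -> <-]].
exists x => //; exists (totd (bgopp b)).
  by apply/bnd_iff; exists (bgopp b) => //; exact: Sprev_opp.
by rewrite totd_oppE bgadd0.
Qed.

End Alg.

Theorem proposition2p4
  (K : nat -> nat -> topologicalZmodType)
  (d' : forall p q, {additive K p q -> K p.+1 q})
  (d'' : forall p q, {additive K p q -> K p q.+1})
  (cont_d' : forall p q, continuous (d' p q))
  (cont_d'' : forall p q, continuous (d'' p q))
  (dd0 : forall x : BG K, totd d' d'' (totd d' d'' x) = bg0 K)
  (open_d'' : forall p q (U : set (K p q)), open U ->
      exists O : set (K p q.+1),
        open O /\ d'' p q @` U = O `&` [set z | d'' p q.+1 z = 0]) :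
  quasi_open (fun _ => bg0 K) (cplx0 d' d'') (cplxKmodKI d' d'') /\
  quasi_open id (cplxKI d' d'') (cplxK d' d'') /\
  (forall n, hom_map_open id (cplxKI d' d'') (cplxK d' d'') n).
Proof.
split; [|split].
- move=> n W HW; exact: (@part1 K d' d'' cont_d' dd0 open_d'' n W HW).
- move=> n W HW; exact: (@part2 K d' d'' cont_d' dd0 open_d'' n W HW).
- move=> n; exact: (@part3 K d' d'' cont_d' dd0 open_d'' n).
Qed.
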